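(* Let $n\ge 3$ and $k\ge 0$ be integers and let $G_n^k$ be the graph of critical pairs of the crown $S_n^k$ (defined in the context). Then the maximum size of an independent set in $G_n^k$ is $(k+1)(k+2)/2$.
   Context: For integers $n\ge3$, $k\ge0$, the crown $S_n^k$ is the poset with ground set $A\cup B$, where $A=\{a_1,\dots,a_{n+k}\}$ and $B=\{b_1,\dots,b_{n+k}\}$, indices interpreted cyclically modulo $n+k$. Elements of $A$ are pairwise incomparable, elements of $B$ are pairwise incomparable, and for $a_i\in A$, $b_j\in B$: $a_i$ is incomparable to $b_j$ when $j\in\{i,i+1,\dots,i+k\}$ (mod $n+k$), and $a_i<b_j$ otherwise. Let $\mathrm{Inc}(A,B)$ be the set of pairs $(a,b)\in A\times B$ with $a$ incomparable to $b$. The graph $G_n^k$ has vertex set $\mathrm{Inc}(A,B)$, and $(a,b)$ is adjacent to $(x,y)$ if and only if $a<y$ and $x<b$ in $S_n^k$. *)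

(* Defs.v *)
From mathcomp Require Import all_boot.
Unset Printing Implicit Defensive.

(* Crown S_n^k with m = n + k: A = {a_i}, B = {b_j}, indices i, j : 'I_(n+k)
   (taken 0-based, cyclically modulo n+k).
   Ground set: 'I_(n+k) + 'I_(n+k), inl i = a_i, inr j = b_j. *)

(* a_i is incomparable to b_j iff j in {i, i+1, ..., i+k} (mod n+k). *)
Definition crown_inc (n k : nat) (i j : 'I_(n + k)) : bool :=
  ((j + (n + k) - i) %% (n + k) <= k).

Definition crown_lt (n k : nat) (x y : 'I_(n + k) + 'I_(n + k)) : bool :=
  match x, y with
  | inl i, inr j => ~~ crown_inc n k i j
  | _, _ => false
  end.

Definition IncAB (n k : nat) : {set ('I_(n + k) * 'I_(n + k))%type} :=
  [set p | crown_inc n k p.1 p.2].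

Definition Gadj (n k : nat) (u v : ('I_(n + k) * 'I_(n + k))%type) : bool :=
  crown_lt n k (inl u.1) (inr v.2) && crown_lt n k (inl v.1) (inr u.2).

Definition Gindep (n k : nat) (S : {set ('I_(n + k) * 'I_(n + k))%type}) : bool :=
  (S \subset IncAB n k) && [forall u in S, forall v in S, ~~ Gadj n k u v].

(* Main.v *)
Require Import Defs.
From mathcomp Require Import all_boot zify.
Lemma modsubP m x y : y < m -> x < m ->
  ((x + m - y) %% m = x - y /\ y <= x) \/ ((x + m - y) %% m = x + m - y /\ x < y).
Proof.
move=> hy hx; case: (leqP y x) => h.
  left; split=> //; rewrite -addnBAC // modnDr modn_small //; lia.
right; split=> //; rewrite modn_small //; lia.
Qed.

Ltac msimp := repeat match goal with |- context[(?x + ?m - ?y) %% ?m] =>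
  lazymatch x with context[_ %% _] => fail | _ => idtac end;
  case: (@modsubP m x y ltac:(lia) ltac:(lia)) => [[-> ?]|[-> ?]] end.

Lemma crfA m k i : k + 2 <= m -> i < m -> k < (((i + m - 1) %% m) + m - i) %% m.
Proof. move=> h1 h2; msimp; lia. Qed.

Lemma crfB m n k ist s : m = n + k -> ist < m -> s + 2 < n ->
  k < (((ist + m - (s+2)) %% m) + m - ist) %% m.
Proof. move=> e h1 h2; subst m; msimp; lia. Qed.

Lemma crfC m i i' : 1 < m -> i < m -> i' < m ->
  (i + m - 1) %% m = (i' + m - 1) %% m -> i = i'.
Proof. move=> h1 h2 h3; msimp; lia. Qed.

Lemma crfD m n k ist s s' : m = n + k -> ist < m -> s + 2 < n -> s' + 2 < n ->
  (ist + m - (s+2)) %% m = (ist + m - (s'+2)) %% m -> s = s'.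
Proof. move=> e h1 h2 h3; subst m; msimp; lia. Qed.

Lemma crfE m n k j i ist s : m = n + k -> i < m -> j < m -> ist < m -> s + 2 < n ->
  (j + m - i) %% m <= k -> (j + m - ist) %% m <= k ->
  (j + m - i) %% m <= (j + m - ist) %% m ->
  (i + m - 1) %% m = (ist + m - (s+2)) %% m -> False.
Proof. move=> e h1 h2 h3 h4; subst m; msimp; lia. Qed.
Lemma cardE' (T : finType) (A : {set T}) : #|A| = \sum_(x : T) ((x \in A) : nat).
Proof. by rewrite -sum1_card big_mkcond; apply: eq_bigr => x _; case: (x \in A). Qed.

Lemma sum_le m j : j < m -> \sum_(i < m) ((i <= j) : nat) = j.+1.
Proof.
move=> hj; transitivity (\sum_(i < m | i < j.+1) 1).
  by rewrite [RHS]big_mkcond; apply: eq_bigr => i _; rewrite ltnS; case: (i <= j).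
by rewrite -(big_ord_widen m (fun _ => 1) hj) big_const_ord iter_addn_0 mul1n.
Qed.

Lemma sum_tri m k : k < m -> 2 * \sum_(j < m) ((j <= k) * j.+1) = (k + 1) * (k + 2).
Proof.
move=> hk; transitivity (2 * \sum_(j < m | j < k.+1) j.+1).
  by congr (2 * _); rewrite [RHS]big_mkcond; apply: eq_bigr => i _; rewrite ltnS; case: (i <= k); rewrite ?mul1n ?mul0n.
rewrite -(big_ord_widen m (fun j => j.+1) hk).
elim: k {hk} => [|k IH]; first by rewrite big_ord_recr big_ord0.
rewrite big_ord_recr /= mulnDr IH; lia.
Qed.

Lemma lower n k : 3 <= n ->
  exists S, Gindep n k S /\ #|S| = (k + 1) * (k + 2) %/ 2.
Proof.
move=> Hn.
exists [set p : 'I_(n + k) * 'I_(n + k) | (p.1 <= p.2) && (p.2 <= k)]; split.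
  apply/andP; split.
    apply/subsetP => -[i j]; rewrite !inE /= => /andP[h1 h2]; rewrite /crown_inc.
    have := ltn_ord i; have := ltn_ord j; move=> *; msimp; lia.
  apply/forallP => -[i j]; apply/implyP; rewrite inE /= => /andP[h1 h2].
  apply/forallP => -[i' j']; apply/implyP; rewrite inE /= => /andP[h1' h2'].
  rewrite /Gadj /crown_lt /= negb_and !negbK /crown_inc.
  have := ltn_ord i; have := ltn_ord j; have := ltn_ord i'; have := ltn_ord j'.
  move=> *; msimp; lia.
set S0 := [set p | _].
suff H2 : 2 * #|S0| = (k + 1) * (k + 2) by rewrite -H2 mulKn.
rewrite cardE'.
rewrite (eq_bigr (fun p => ((p.1, p.2) \in S0):nat)); last by case.
rewrite -(pair_bigA _ (fun i j => ((i,j) \in S0) : nat)) /= exchange_big /=.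
rewrite -(@sum_tri (n + k) k); last by lia.
congr (2 * _); apply: eq_bigr => j _.
transitivity (\sum_(i < n+k) ((i <= j) && (j <= k) : nat)).
  by apply: eq_bigr => i _; rewrite inE.
case hjk: (j <= k).
  rewrite mul1n -(@sum_le (n+k) j (ltn_ord j)); apply: eq_bigr => i _; by rewrite andbT.
rewrite mul0n; apply: big1 => i _; by rewrite andbF.
Qed.
Lemma upper n k (S : {set ('I_(n + k) * 'I_(n + k))%type}) :
  3 <= n -> Gindep n k S -> 2 * #|S| <= (k + 1) * (k + 2).
Proof.
move=> Hn /andP[Hsub /forallP Hall].
have Hinc : forall i j, (i, j) \in S -> crown_inc n k i j.
  by move=> i j H; move/subsetP: Hsub => /(_ _ H); rewrite /IncAB inE.
have Hna : forall i j i' j', (i,j) \in S -> (i',j') \in S ->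
    crown_inc n k i j' || crown_inc n k i' j.
  move=> i j i' j' H H'.
  move: (Hall (i,j)) => /implyP /(_ H) /forallP /(_ (i',j')) /implyP /(_ H').
  by rewrite /Gadj /crown_lt /= negb_and !negbK.
pose hit (j j' : 'I_(n+k)) := [exists i, ((i, j) \in S) && ~~ crown_inc n k i j'].
pose R := [set j : 'I_(n+k) | [exists i, (i, j) \in S]].
pose U (j : 'I_(n+k)) := [set i | (i, j) \in S].
have F1 : forall j, hit j j = false.
  move=> j; apply/negbTE/existsP => -[i /andP[H /negP]]; apply; exact: Hinc.
have F2 : forall j j', hit j j' -> hit j' j -> False.
  move=> j j' /existsP[i /andP[H Hn1]] /existsP[i' /andP[H' Hn2]].
  by move: (Hna _ _ _ _ H H'); rewrite (negbTE Hn1) (negbTE Hn2).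
have Hm : 0 < n + k by lia.
have F3 : forall j, j \in R -> #|U j| + (n - 2) <= \sum_j' hit j j'.
  move=> j; rewrite inE => /existsP[i0 Hi0].
  pose d (x : 'I_(n+k)) := (j + (n+k) - x) %% (n+k).
  have Hi0' : i0 \in U j by rewrite inE.
  case: (@arg_maxnP _ i0 (mem (U j)) d Hi0') => ist His Hmax.
  pose f (i : 'I_(n+k)) : 'I_(n+k) := Ordinal (ltn_pmod (i + (n+k) - 1) Hm).
  pose g (s : 'I_(n-2)) : 'I_(n+k) := Ordinal (ltn_pmod (ist + (n+k) - (s+2)) Hm).
  have finj : injective f.
    move=> x y /(congr1 val) /= E; apply/val_inj => /=.
    apply: (@crfC (n+k)) E => //; lia.
  have ginj : injective g.
    move=> x y /(congr1 val) /= E; apply/val_inj => /=.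
    have := ltn_ord x; have := ltn_ord y; have := ltn_ord ist.
    move=> *; apply: (@crfD (n+k) n k ist) E => //; lia.
  have His2 : ist \in U j := His.
  have HisS : (ist, j) \in S by move: His2; rewrite inE.
  have sub : f @: U j :|: g @: setT \subset [set j' | hit j j'].
    apply/subsetP => x /setUP[/imsetP[i Hi ->]|/imsetP[s _ ->]];
      rewrite inE; apply/existsP.
      exists i; move: Hi; rewrite inE => ->; rewrite /crown_inc /= -ltnNge.
      apply: crfA => //; lia.
    exists ist; rewrite HisS /crown_inc /= -ltnNge.
    have := ltn_ord s; move=> ?; apply: (@crfB (n+k) n k) => //; lia.
  have dis : f @: U j :&: g @: setT = set0.
    apply/setP => x; rewrite [RHS]inE; apply/negbTE/negP; rewrite inE.
    move=> /andP[/imsetP[i Hi ->] /imsetP[s _ /(congr1 val) /= E]].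
    have HiS : (i, j) \in S by move: Hi; rewrite inE.
    have := ltn_ord s; move=> ?.
    have Hs2 : s + 2 < n by lia.
    exact: (@crfE (n+k) n k j i ist s erefl (ltn_ord i) (ltn_ord j) (ltn_ord ist) Hs2
      (Hinc _ _ HiS) (Hinc _ _ HisS) (Hmax i Hi) E).
  have -> : \sum_j' hit j j' = #|[set j' | hit j j']|.
    by rewrite cardE'; apply: eq_bigr => x _; rewrite inE.
  apply: leq_trans (subset_leq_card sub).
  have := cardsUI (f @: U j) (g @: setT).
  by rewrite dis cards0 addn0 !card_imset // cardsT card_ord => ->.
have UR : forall j, j \notin R -> #|U j| = 0.
  move=> j; rewrite inE => /existsPn H; apply/eqP; rewrite cards_eq0; apply/eqP/setP => i.
  by rewrite !inE (negbTE (H i)).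
have cardS : #|S| = \sum_(j in R) #|U j|.
  rewrite cardE'.
  transitivity (\sum_(j : 'I_(n+k)) #|U j|).
    rewrite (eq_bigr (fun p => ((p.1, p.2) \in S):nat)); last by case.
    rewrite -(pair_bigA _ (fun i j => ((i,j) \in S) : nat)) /= exchange_big /=.
    apply: eq_bigr => j _; rewrite cardE'; apply: eq_bigr => i _; by rewrite inE.
  rewrite (bigID (mem R)) /= [X in _ + X]big1 ?addn0 //.
pose h := \sum_(j in R) \sum_(j' in R) (hit j j' : nat).
have H2h : h + h <= #|R| * (#|R| - 1).
  rewrite {2}/h exchange_big /h -big_split /= -sum_nat_const.
  apply: leq_sum => a Ha; rewrite -big_split /=.
  rewrite (bigD1 a Ha) /= F1 /= add0n.
  apply: leq_trans (_ : \sum_(b | (b \in R) && (b != a)) 1 <= _).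
    apply: leq_sum => b _; case E1: (hit a b); case E2: (hit b a) => //.
    by exfalso; exact: F2 E1 E2.
  rewrite sum1dep_card (cardsD1 a R) Ha add1n /= subSS subn0.
  apply: eq_leq; apply: eq_card => b; rewrite !inE andbC.
  done.
have step : forall j, \sum_j' (hit j j' : nat) <= \sum_(j' in R) (hit j j' : nat) + (n + k - #|R|).
  move=> j; rewrite (bigID (mem R)) /= leq_add2l.
  apply: leq_trans (_ : \sum_(j' | j' \notin R) 1 <= _).
    by apply: leq_sum => b _; apply: leq_b1.
  rewrite sum1dep_card.
  have HC := cardsC R; rewrite card_ord in HC.
  have -> : #|[set x | x \notin R]| = #|~: R| by apply: eq_card => x; rewrite !inE.
  move: HC; set c := #|~: R|; set r := #|R|; move=> HC; lia.
have Hmain : #|S| + #|R| * (n - 2) <= h + #|R| * (n + k - #|R|).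
  rewrite cardS -!sum_nat_const -!big_split /=.
  apply: leq_sum => j Hj; apply: leq_trans (F3 j Hj) _; exact: step.
have HR : #|R| <= n + k by rewrite -[X in _ <= X]card_ord max_card.
clearbody h; move: Hmain H2h HR; set s := #|S|; set r := #|R| => Hmain H2h HR.
have [Hr|Hr] := leqP r (k + 1).
  nia.
nia.
Qed.

Theorem theorem1p2 (n k : nat) : 3 <= n ->
  (exists S, Gindep n k S /\ #|S| = (k + 1) * (k + 2) %/ 2) /\
  (forall S, Gindep n k S -> #|S| <= (k + 1) * (k + 2) %/ 2).
Proof.
move=> Hn; split; first exact: lower.
move=> S HS; rewrite leq_divRL // mulnC; exact: upper.
Qed.
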